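(* Let $\alpha\in(2/3,1)$. If there exists an $\varepsilon$-differentially private online algorithm that at time step $j$ outputs $\hat F_e(j,\alpha)$ and achieves $(\delta,\gamma)$-utility with respect to the exponential decay sum $F_e(j,\alpha)=\sum_{i=1}^j x_i\alpha^{j-i}$, then $$\delta\ge\Omega\!\left(\min\left\{\frac{\alpha}{1-\alpha},\ \frac{\log(1/\gamma)}{\varepsilon}\right\}\right).$$
   Context: Online model: at each time step $i$ a randomized online algorithm receives $x_i\in[0,1]$ and outputs a real number $\hat F(x_1,\ldots,x_i)$. It is $\varepsilon$-differentially private (under continual observation) if for all $T$, all measurable $S\subseteq\mathbb{R}^T$, all inputs $x_1,\ldots,x_T\in[0,1]$, all $j\le T$ and all $x_j'\in[0,1]$, $\Pr[(\hat F(x_1,\ldots,x_j,\ldots,x_k))_{k=1}^T\in S]\le e^{\varepsilon}\Pr[(\hat F(x_1,\ldots,x_j',\ldots,x_k))_{k=1}^T\in S]$ (second sequence computed on the input with $x_j$ replaced by $x_j'$). It achieves $(\delta,\gamma)$-utility with respect to $F$ if for all inputs and all $j$, $\Pr[|\hat F(x_1,\ldots,x_j)-F(x_1,\ldots,x_j)|>\delta]<\gamma$. *)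

(* Defs.v *)
From HB Require Import structures.
From mathcomp Require Import all_boot all_order all_algebra.
From mathcomp Require Import all_classical all_reals all_analysis.
Set Implicit Arguments. Unset Strict Implicit. Unset Printing Implicit Defensive.
Import Order.TTheory GRing.Theory Num.Theory.
Local Open Scope classical_set_scope.
Local Open Scope ring_scope.

Definition expdecay (R : realType) (alpha : R) (s : seq R) : R :=
  \sum_(i < size s) s`_i * alpha ^+ (size s - 1 - i).

Definition unit_input (R : realType) (s : seq R) : Prop :=
  forall i, (i < size s)%N -> 0 <= s`_i <= 1.

Definition coord_sets (R : realType) (T : nat) : set (set ('I_T -> R)) :=
  [set A | exists (i : 'I_T) (B : set R), measurable B /\ A = (fun f => f i) @^-1` B].

Definition measurable_RT (R : realType) (T : nat) (S : set ('I_T -> R)) : Prop :=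
  <<s @coord_sets R T >> S.

(* A randomized online algorithm is modelled by a probability space
   (Omega, P) of internal randomness and a map A : seq R -> Omega -> R,
   where A [:: x_1; ...; x_k] w is the output \hat F(x_1,...,x_k) at time k
   (the output at time k depends only on the input received so far). *)

Definition outputs (R : realType) d (Omega : measurableType d)
  (A : seq R -> Omega -> R) (x : seq R) (w : Omega) : 'I_(size x) -> R :=
  fun k => A (take k.+1 x) w.

Definition online_dp (R : realType) d (Omega : measurableType d)
  (P : probability Omega R) (A : seq R -> Omega -> R) (eps : R) : Prop :=
  forall (x : seq R) (j : nat) (y : R) (S : set ('I_(size x) -> R)),
    unit_input x -> (j < size x)%N -> 0 <= y <= 1 ->
    measurable_RT S ->
    (P [set w | S (@outputs R d Omega A x w)] <=
     (expR eps)%:E *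
       P [set w | S (fun k : 'I_(size x) => A (take k.+1 (set_nth 0%R x j y)) w)])%E.

Definition utility (R : realType) d (Omega : measurableType d)
  (P : probability Omega R) (A : seq R -> Omega -> R) (F : seq R -> R)
  (delta gamma : R) : Prop :=
  forall s : seq R, s != [::] -> unit_input s ->
    (P [set w | (delta < `|A s w - F s|)%R] < gamma%:E)%E.

(* Main.v *)
Require Import Defs.
From HB Require Import structures.
From mathcomp Require Import all_boot all_order all_algebra.
From mathcomp Require Import all_classical all_reals all_analysis.
From mathcomp Require Import ring lra.
Import Order.TTheory GRing.Theory Num.Theory.
Local Open Scope classical_set_scope.
Local Open Scope ring_scope.

Lemma measV (R : realType) (a b : R) : measurable [set r : R | a < `|r - b|].
Proof.
have -> : [set r : R | a < `|r - b|] =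
  [set` `]b + a, +oo[%R] `|` [set` `]-oo, b - a[%R].
  apply/seteqP; split => r /=.
    rewrite ltr_normr => /orP[h|h]; [left|right]; rewrite /= in_itv /= ?andbT; lra.
  case=> /=; rewrite in_itv /= ?andbT => h; rewrite ltr_normr; apply/orP;
    [left|right]; lra.
by apply: measurableU; apply: measurable_itv.
Qed.

Lemma bernoulli_low (R : realType) (h : R) (k : nat) : 0 <= h <= 1 ->
  1 - k%:R * h <= (1 - h) ^+ k.
Proof.
move=> /andP[h0 h1]; elim: k => [|k IH]; first by rewrite mul0r subr0 expr0.
rewrite exprS -natr1.
have h1' : 0 <= 1 - h by rewrite subr_ge0.
apply: le_trans (ler_wpM2l h1' IH).
have : 0 <= k%:R * h * h by rewrite mulr_ge0 // mulr_ge0.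
lra.
Qed.

Definition zseq (R : realType) (n t : nat) : seq R :=
  mkseq (fun i => if (i < t)%N then 1 else 0) n.

Lemma size_zseq (R : realType) n t : size (zseq R n t) = n.
Proof. exact: size_mkseq. Qed.

Lemma zseq_step (R : realType) n t : (t < n)%N ->
  set_nth 0 (zseq R n t.+1) t 0 = zseq R n t.
Proof.
move=> tn; apply: (@eq_from_nth _ 0).
  by rewrite size_set_nth !size_zseq; apply/maxn_idPr.
move=> i; rewrite size_set_nth size_zseq (maxn_idPr tn) => iN.
rewrite nth_set_nth /= !nth_mkseq //.
case: eqP => [->|/eqP ne]; first by rewrite ltnn.
by rewrite ltnS leq_eqVlt (negbTE ne).
Qed.

Lemma zseq_unit (R : realType) n t : unit_input (zseq R n t).
Proof.
move=> i; rewrite size_zseq => iN; rewrite nth_mkseq //.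
by case: ifP => _; rewrite ?lexx ?ler01.
Qed.

Lemma zseq0 (R : realType) (alpha : R) n : expdecay alpha (zseq R n 0) = 0.
Proof.
rewrite /expdecay big1 // => i _.
have := ltn_ord i; rewrite {2}size_zseq => iN.
by rewrite nth_mkseq // mul0r.
Qed.

Lemma zseqn (R : realType) (alpha : R) n :
  expdecay alpha (zseq R n n) = \sum_(i < n) alpha ^+ (n - 1 - i).
Proof.
rewrite /expdecay size_zseq; apply: eq_bigr => i _.
by rewrite nth_mkseq // ltn_ord mul1r.
Qed.

Lemma dp_step (R : realType) d (Omega : measurableType d)
  (P : probability Omega R) (A : seq R -> Omega -> R) (eps delta F1 : R)
  (x : seq R) (j : nat) (y : R) :
  online_dp P A eps -> unit_input x -> (j < size x)%N -> 0 <= y <= 1 ->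
  (0 < size x)%N ->
  (P (~` [set w | (delta < `|A x w - F1|)%R]) <=
   (expR eps)%:E * P (~` [set w | (delta < `|A (set_nth 0 x j y) w - F1|)%R]))%E.
Proof.
move=> dp ux jx y01 x0.
pose i : 'I_(size x) := Ordinal (eq_ind_r is_true x0 (ltn_predL (size x))).
pose S := (fun f : 'I_(size x) -> R => f i) @^-1` (~` [set r | delta < `|r - F1|]).
have mS : measurable_RT S.
  apply: sub_gen_smallest; exists i, (~` [set r | delta < `|r - F1|]).
  by split => //; apply: measurableC; apply: measV.
have := dp x j y S ux jx y01 mS.
have ei : i.+1 = size x by rewrite /= prednK.
have -> : [set w | S (@outputs R d Omega A x w)] = ~` [set w | (delta < `|A x w - F1|)%R].
  by apply/seteqP; split => w; rewrite /S /outputs /= ei take_size.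
have -> : [set w | S (fun k : 'I_(size x) => A (take k.+1 (set_nth 0 x j y)) w)]
   = ~` [set w | (delta < `|A (set_nth 0 x j y) w - F1|)%R].
  have hs : (size (set_nth 0%R x j y) <= size x)%N by rewrite size_set_nth (maxn_idPr jx).
  by apply/seteqP; split => w; rewrite /S /= ei take_oversize.
by [].
Qed.

Theorem corollary2 (R : realType) :
  exists c : R, 0 < c /\
  exists gamma0 : R, 0 < gamma0 /\
  exists eps0 : R, 0 < eps0 /\
  forall (d : measure_display) (Omega : measurableType d)
         (P : probability Omega R) (A : seq R -> Omega -> R)
         (alpha eps delta gamma : R),
    2 / 3 < alpha < 1 ->
    0 < eps <= eps0 ->
    0 < gamma <= gamma0 ->
    (forall s : seq R, measurable_fun setT (A s)) ->
    online_dp P A eps ->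
    utility P A (expdecay alpha) delta gamma ->
    c * Num.min (alpha / (1 - alpha)) (ln (1 / gamma) / eps) <= delta.
Proof.
exists (1/16); split; first by lra.
exists (expR (-2)); split; first exact: expR_gt0.
exists 1; split; first exact: ltr01.
move=> d Omega P A alpha eps delta gamma /andP[a1 a2] /andP[e0 e1] /andP[g0 g1]
  mA dp ut.
have q2 : expR (-1) <= 1/2 :> R.
  have := expR_ge1Dx (1:R); have := expR_gt0 (1:R).
  rewrite expRN; set e := expR 1 => ep e2.
  have : e^-1 * e = 1 by rewrite mulVf // gt_eqF.
  have : 0 < e^-1 by rewrite invr_gt0.
  nra.
have q0 : 0 <= expR (-1) :> R by exact: expR_ge0.
have g4 : gamma <= 1/4.
  apply: (le_trans g1); have -> : -2 = -1 + -1 :> R by lra.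
  rewrite expRD; nra.
set L := ln (1/gamma).
have hL2 : 2 <= L.
  rewrite /L -(expRK 2) ler_ln ?posrE ?expR_gt0 ?divr_gt0 //.
  rewrite expRN in g1; rewrite div1r -(invrK (expR 2)) lef_pV2 //
    ?posrE ?invr_gt0 ?expR_gt0 //.
have hgL : gamma = expR (- L).
  by rewrite /L div1r lnV ?posrE // opprK lnK // posrE.
set x := Num.min (L / (2 * eps)) (1 / (2 * (1 - alpha))).
have am : 0 < 1 - alpha by lra.
have hxL : x <= L / (2 * eps) by rewrite ge_min lexx.
have hxa : x <= 1 / (2 * (1 - alpha)) by rewrite ge_min lexx orbT.
have hx1 : 1 <= x.
  rewrite le_min; apply/andP; split.
    rewrite ler_pdivlMr ?mulr_gt0 //; lra.
  rewrite ler_pdivlMr ?mulr_gt0 //; lra.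
have x0 : 0 <= x by apply: le_trans hx1; exact: ler01.
set n := Num.trunc x.
have /andP[hn1 hn2] := truncn_itv x0.
have n1 : (0 < n)%N by rewrite truncn_gt0.
have n1R : 1 <= n%:R :> R by rewrite ler1n.
rewrite -natr1 in hn2.
have hxn : x <= 2 * n%:R by lra.
have hne : (2 * eps) * n%:R <= L.
  by rewrite mulrC -ler_pdivlMr ?mulr_gt0 //; apply: le_trans hn1 hxL.
have hna : (2 * (1 - alpha)) * n%:R <= 1.
  by rewrite mulrC -ler_pdivlMr ?mulr_gt0 //; apply: le_trans hn1 hxa.
set F1 := expdecay alpha (zseq R n n).
have lb : n%:R / 2 <= F1.
  rewrite /F1 zseqn.
  apply: le_trans (_ : \sum_(i < n) (1/2 : R) <= _).
    by rewrite sumr_const card_ord -[(1/2) *+ n]mulr_natr; lra.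
  apply: ler_sum => i _.
  have hb01 : 0 <= 1 - alpha <= 1 by apply/andP; split; lra.
  have hb := @bernoulli_low R (1 - alpha) n hb01.
  have e : 1 - (1 - alpha) = alpha by ring.
  rewrite e in hb.
  apply: le_trans (_ : alpha ^+ n <= _).
    apply: le_trans hb; lra.
  apply: ler_wiXn2l; [by apply: le_trans (ltW a1); rewrite divr_ge0 | exact: ltW a2 |].
  exact: leq_trans (leq_subr _ _) (leq_subr _ _).
have key : F1 <= 2 * delta.
  rewrite leNgt; apply/negP => hlt.
  pose U z := [set w | (delta < `|A z w - F1|)%R].
  have mV : forall b : R, measurable [set w | (delta < `|A (zseq R n 0) w - b|)%R]
    /\ measurable (U (zseq R n n)) /\ measurable (U (zseq R n 0)).
    move=> b; split; last split.
    - by have := mA (zseq R n 0) measurableT _ (@measV _ delta b); rewrite setTI.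
    - by have := mA (zseq R n n) measurableT _ (@measV _ delta F1); rewrite setTI.
    - by have := mA (zseq R n 0) measurableT _ (@measV _ delta F1); rewrite setTI.
  have ne : zseq R n n != [::] by rewrite -size_eq0 size_zseq -lt0n.
  have ne0 : zseq R n 0 != [::] by rewrite -size_eq0 size_zseq -lt0n.
  have chain : forall t, (t <= n)%N ->
      (P (~` U (zseq R n t)) <= ((expR eps) ^+ t)%:E * P (~` U (zseq R n 0)))%E.
    elim=> [|t IH] tn; first by rewrite expr0 mul1e.
    have h01 : (0:R) <= (0:R) <= (1:R) by rewrite lexx ler01.
    have tl : (t < size (zseq R n t.+1))%N by rewrite size_zseq.
    have sp : (0 < size (zseq R n t.+1))%N by rewrite size_zseq (leq_ltn_trans _ tn).
    have := @dp_step R d Omega P A eps delta F1 (zseq R n t.+1) t 0 dp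
      (zseq_unit _ _ _) tl h01 sp.
    rewrite zseq_step // => h; apply: le_trans h _.
    rewrite exprS EFinM -muleA; apply: lee_wpmul2l.
      by rewrite lee_fin expR_ge0.
    by apply: IH; apply: ltnW.
  have hP0 : (P (~` U (zseq R n 0)) < gamma%:E)%E.
    apply: le_lt_trans (ut (zseq R n 0) ne0 (zseq_unit _ _ _)).
    have [m1 [m2 m3]] := mV (expdecay alpha (zseq R n 0)).
    apply: le_measure; rewrite ?inE //; first exact: measurableC.
    move=> w /= hw; rewrite zseq0 subr0.
    move/negP: hw; rewrite -leNgt ler_norml => /andP[h1 h2].
    apply: lt_le_trans (ler_norm _); lra.
  have hPn : ((1 - gamma)%:E <= P (~` U (zseq R n n)))%E.
    have [m1 [m2 m3]] := mV 0.
    rewrite probability_setC //.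
    have hu := ut (zseq R n n) ne (zseq_unit _ _ _).
    have fin := fin_num_measure P (U (zseq R n n)) m2.
    rewrite -(fineK fin) in hu *; rewrite lte_fin in hu.
    rewrite -EFinB lee_fin; lra.
  have h3 : (((expR eps) ^+ n)%:E * P (~` U (zseq R n 0)) <=
            ((expR eps) ^+ n * gamma)%:E)%E.
    rewrite EFinM; apply: lee_wpmul2l; first by rewrite lee_fin exprn_ge0 // expR_ge0.
    exact: ltW.
  have := le_trans hPn (le_trans (chain n (leqnn n)) h3).
  rewrite lee_fin -expRM_natl hgL -expRD.
  have : expR (n%:R * eps + - L) <= expR (-1).
    rewrite ler_expR; lra.
  rewrite -hgL; lra.
set M := Num.min (alpha / (1 - alpha)) (L / eps).
have hM1 : M <= L / eps by rewrite ge_min lexx orbT.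
have hM2 : M <= alpha / (1 - alpha) by rewrite ge_min lexx.
have hM1' : M * eps <= L by rewrite -ler_pdivlMr.
have hM2' : M * (1 - alpha) <= alpha by rewrite -ler_pdivlMr.
have hMx : M / 2 <= x.
  rewrite le_min; apply/andP; split.
    rewrite ler_pdivlMr ?mulr_gt0 //; lra.
  rewrite ler_pdivlMr ?mulr_gt0 //; lra.
lra.
Qed.
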